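(* With $\lambda:=\frac{-\beta+\sqrt{-1}\sqrt{4\alpha-\beta^2}}{2}:\Omega\to\mathbb C$, the structure is rigid, i.e. $i_x+i\,i_y=0$ on $\Omega$, if and only if $\lambda_x+\lambda\,\lambda_y=0$ on $\Omega$ (ordinary complex multiplication and partial derivatives).
   Context: Let $\Omega\subset\mathbb R^2$ be open with coordinates $(x,y)$, and let $\alpha,\beta\in C^1(\Omega,\mathbb R)$ satisfy $\Delta:=4\alpha-\beta^2>0$ on $\Omega$. For $z\in\Omega$ let $A_z:=\mathbb R[X]/(X^2+\beta(z)X+\alpha(z))$ and let $i=i(z)$ denote the class of $X$, so $i^2+\beta i+\alpha=0$ and $\{1,i(z)\}$ is a real basis of $A_z$. In each fiber $2i+\beta$ is invertible with $(2i+\beta)^{-1}=(-\beta-2i)/\Delta$. The derivatives of the generator are the sections $i_x:=-(\alpha_x+\beta_x i)(2i+\beta)^{-1}$, $i_y:=-(\alpha_y+\beta_y i)(2i+\beta)^{-1}$. The structure is called rigid if $i_x+i\,i_y=0$ on $\Omega$. $\sqrt{-1}$ denotes the imaginary unit of $\mathbb C$. *)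

(* Defs.v *)
From HB Require Import structures.
From mathcomp Require Import all_boot all_order all_algebra.
From mathcomp Require Import all_classical all_reals all_analysis.
From mathcomp Require Import complex.
Set Implicit Arguments. Unset Strict Implicit. Unset Printing Implicit Defensive.
Import Order.TTheory GRing.Theory Num.Theory.
Import numFieldNormedType.Exports.
Local Open Scope classical_set_scope.
Local Open Scope ring_scope.

Section Defs.
Variable R : realType.

Definition pdx (f : R * R -> R) (z : R * R) : R := derive1 (fun t => f (t, z.2)) z.1.
Definition pdy (f : R * R -> R) (z : R * R) : R := derive1 (fun t => f (z.1, t)) z.2.

Definition C1_on (Omega : set (R * R)) (f : R * R -> R) : Prop :=
  forall z, Omega z ->
    [/\ derivable (fun t => f (t, z.2)) z.1 1,
        derivable (fun t => f (z.1, t)) z.2 1,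
        {for z, continuous (pdx f)} &
        {for z, continuous (pdy f)}].

Definition cpdx (g : R * R -> complex.complex R) (z : R * R) : complex.complex R :=
  complex.Complex (pdx (fun w => complex.Re (g w)) z) (pdx (fun w => complex.Im (g w)) z).
Definition cpdy (g : R * R -> complex.complex R) (z : R * R) : complex.complex R :=
  complex.Complex (pdy (fun w => complex.Re (g w)) z) (pdy (fun w => complex.Im (g w)) z).

(* The fiber algebra A_z = R[X]/(X^2 + beta(z) X + alpha(z)); its elements are
   represented by polynomials, two polynomials denoting the same element iff
   they agree modulo the defining polynomial. *)
Definition defpoly (alpha beta : R * R -> R) (z : R * R) : {poly R} :=
  'X^2 + (beta z)%:P * 'X + (alpha z)%:P.

Definition Aeq (alpha beta : R * R -> R) (z : R * R) (p q : {poly R}) : Prop :=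
  p %% defpoly alpha beta z = q %% defpoly alpha beta z.

Definition Delta (alpha beta : R * R -> R) (z : R * R) : R :=
  4 * alpha z - beta z ^+ 2.

(* (2 i + beta)^{-1} = (-beta - 2 i)/Delta in A_z, with i the class of X. *)
Definition inv2ib (alpha beta : R * R -> R) (z : R * R) : {poly R} :=
  (Delta alpha beta z)^-1 *: ((- beta z)%:P - 2%:R *: 'X).

Definition i_x (alpha beta : R * R -> R) (z : R * R) : {poly R} :=
  - (((pdx alpha z)%:P + (pdx beta z)%:P * 'X) * inv2ib alpha beta z).
Definition i_y (alpha beta : R * R -> R) (z : R * R) : {poly R} :=
  - (((pdy alpha z)%:P + (pdy beta z)%:P * 'X) * inv2ib alpha beta z).

Definition rigid (Omega : set (R * R)) (alpha beta : R * R -> R) : Prop :=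
  forall z, Omega z -> Aeq alpha beta z (i_x alpha beta z + 'X * i_y alpha beta z) 0.

Definition lambda (alpha beta : R * R -> R) (z : R * R) : complex.complex R :=
  complex.Complex (- beta z / 2) (Num.sqrt (Delta alpha beta z) / 2).

End Defs.

(* Main.v *)
Require Import Defs.
From HB Require Import structures.
From mathcomp Require Import all_boot all_order all_algebra.
From mathcomp Require Import all_classical all_reals all_analysis.
From mathcomp Require Import complex.
From mathcomp Require Import ring lra.
Import Order.TTheory GRing.Theory Num.Theory.
Import numFieldNormedType.Exports.
Local Open Scope classical_set_scope.
Local Open Scope ring_scope.

Section S. Variable R : realType.
Lemma dsqI (A B : R -> R) (t : R) : derivable A t 1 -> derivable B t 1 ->
  0 < 4 * A t - B t ^+ 2 ->
  is_derive t 1 (fun s => Num.sqrt (4 * A s - B s ^+ 2))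
  ((4 * derive1 A t - 2 * B t * derive1 B t) / (2 * Num.sqrt (4 * A t - B t ^+ 2))).
Proof.
move=> dA dB pos.
have hA : is_derive t 1 A (derive1 A t) by rewrite derive1E; apply: derivableP.
have hB : is_derive t 1 B (derive1 B t) by rewrite derive1E; apply: derivableP.
have hD : is_derive t 1 (fun s => 4 * A s - B s ^+ 2) (4 * derive1 A t - 2 * B t * derive1 B t).
  have -> : 4 * derive1 A t - 2 * B t * derive1 B t = 4 *: derive1 A t - (B t * derive1 B t + derive1 B t * B t).
    by rewrite /GRing.scale /=; ring.
  apply: is_deriveB.
  have := is_deriveX 2 hB. rewrite /=. move=> H. apply: is_derive_eq. by rewrite expr1 /GRing.scale /=; ring.
have := @is_derive1_comp R Num.sqrt (fun s => 4 * A s - B s ^+ 2) t _ _ (is_derive1_sqrt pos) hD.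
by rewrite mulrC.
Qed.

Lemma dsq2 (A B : R -> R) (t : R) : derivable A t 1 -> derivable B t 1 ->
  0 < 4 * A t - B t ^+ 2 ->
  derive1 (fun s => Num.sqrt (4 * A s - B s ^+ 2) / 2) t =
  (4 * derive1 A t - 2 * B t * derive1 B t) / (2 * Num.sqrt (4 * A t - B t ^+ 2)) / 2.
Proof.
move=> dA dB pos.
have h2 := is_deriveM (dsqI A B t dA dB pos) (is_derive_cst (2^-1 : R) t 1).
rewrite derive1E (@derive_val _ _ _ _ _ _ _ h2). by rewrite scaler0 add0r /cst /GRing.scale /= mulrC.
Qed.

Lemma dlin (B : R -> R) (t : R) : derivable B t 1 ->
  derive1 (fun s => - B s / 2) t = - derive1 B t / 2.
Proof.
move=> dB.
have hB : is_derive t 1 B (derive1 B t) by rewrite derive1E; apply: derivableP.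
have h2 := is_deriveM (is_deriveN hB) (is_derive_cst (2^-1 : R) t 1).
rewrite derive1E (@derive_val _ _ _ _ _ _ _ h2). by rewrite scaler0 add0r /cst /GRing.scale /= mulrC.
Qed.
Local Notation f := (real_complex R).
Local Notation ev l p := ((map_poly f p).[l]).

Lemma evD (l : R[i]) p q : ev l (p + q) = ev l p + ev l q.
Proof. by rewrite rmorphD hornerD. Qed.
Lemma evN (l : R[i]) p : ev l (- p) = - ev l p.
Proof. by rewrite rmorphN hornerN. Qed.
Lemma evM (l : R[i]) p q : ev l (p * q) = ev l p * ev l q.
Proof. by rewrite rmorphM hornerM. Qed.
Lemma evZ (l : R[i]) c p : ev l (c *: p) = f c * ev l p.
Proof. by rewrite map_polyZ hornerZ. Qed.
Lemma evC (l : R[i]) c : ev l c%:P = f c.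
Proof. by rewrite map_polyC hornerC. Qed.
Lemma evX (l : R[i]) : ev l 'X = l.
Proof. by rewrite map_polyX hornerX. Qed.

Lemma ev_root (a b s : R) : s ^+ 2 = 4 * a - b ^+ 2 ->
  ev (Complex (- b / 2) (s / 2)) ('X^2 + b%:P * 'X + a%:P) = 0.
Proof.
move=> hs.
rewrite !rmorphD rmorphM /= map_polyXn !map_polyC map_polyX !hornerE /=.
have -> : a = (s ^+ 2 + b ^+ 2) / 4 by rewrite hs; field.
rewrite expr2 /=. by congr Complex; field.
Qed.

Lemma size_d (a b : R) : size ('X^2 + b%:P * 'X + a%:P) = 3%N.
Proof.
rewrite -addrA size_addl size_polyXn // size_MXaddC.
case: ifP => // _; rewrite ltnS (leq_ltn_trans (size_polyC_leq1 b)) //.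
Qed.

Lemma ev_mod (a b s : R) (p : {poly R}) : 0 < s -> s ^+ 2 = 4 * a - b ^+ 2 ->
  (p %% ('X^2 + b%:P * 'X + a%:P) = 0) <-> ev (Complex (- b / 2) (s / 2)) p = 0.
Proof.
move=> s0 hs; set d := (X in p %% X); set l := Complex _ _.
have evd : ev l d = 0 by exact: ev_root.
have hp : ev l p = ev l (p %% d) by
  rewrite {1}(divp_eq p d) rmorphD rmorphM hornerD hornerM evd mulr0 add0r.
rewrite hp; split; first by move=> ->; rewrite rmorph0 horner0.
set r := p %% d.
have hr : (size r <= 2)%N.
  have : (size r < size d)%N by rewrite ltn_modp -size_poly_eq0 size_d.
  by rewrite size_d.
have er : r = (r`_1)%:P * 'X + (r`_0)%:P.
  apply/polyP => i; rewrite coefD coefMX coefC.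
  case: i => [|[|i]] /=; rewrite ?coefC ?addr0 ?add0r //.
  by rewrite nth_default // (leq_trans hr).
rewrite er rmorphD rmorphM /= !map_polyC map_polyX !hornerE /l /=.
move=> h; have h1 := congr1 (@complex.Re R) h; have h2 := congr1 (@complex.Im R) h.
rewrite /= in h1 h2.
have r1 : r`_1 = 0.
  have : r`_1 * (s / 2) = 0 by move: h2; rewrite mul0r !addr0.
  move/eqP; rewrite mulf_eq0 => /orP [/eqP //|]; lra.
move: h1; rewrite r1 !mul0r subr0 add0r => ->.
by rewrite !polyC0 ?mul0r addr0.
Qed.
End S.

Lemma pt (R : realType) (Omega : set (R * R)) (alpha beta : R * R -> R) (x y : R) :
  C1_on Omega alpha -> C1_on Omega beta -> Omega (x, y) -> 0 < Delta alpha beta (x, y) ->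
  (Aeq alpha beta (x, y) (i_x alpha beta (x, y) + 'X * i_y alpha beta (x, y)) 0 <->
   cpdx (lambda alpha beta) (x, y) + lambda alpha beta (x, y) * cpdy (lambda alpha beta) (x, y) = 0).
Proof.
move=> ha hb hz hD.
have [dax day _ _] := ha _ hz. have [dbx dby _ _] := hb _ hz.
have s0 : 0 < Num.sqrt (Delta alpha beta (x, y)) by rewrite sqrtr_gt0.
have hs : Num.sqrt (Delta alpha beta (x, y)) ^+ 2 = 4 * alpha (x, y) - beta (x, y) ^+ 2.
  by rewrite sqr_sqrtr // ltW.
rewrite /Aeq /defpoly mod0p (ev_mod _ _ _ _ _ s0 hs).
have cx : cpdx (lambda alpha beta) (x, y) =
  Complex (- pdx beta (x, y) / 2)
   ((4 * pdx alpha (x, y) - 2 * beta (x, y) * pdx beta (x, y)) / (2 * Num.sqrt (Delta alpha beta (x, y))) / 2).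
  rewrite /cpdx /pdx /lambda /=; congr Complex.
    exact: (dlin _ (fun t => beta (t, y)) x dbx).
  exact: (dsq2 _ (fun t => alpha (t, y)) (fun t => beta (t, y)) x dax dbx hD).
have cy : cpdy (lambda alpha beta) (x, y) =
  Complex (- pdy beta (x, y) / 2)
   ((4 * pdy alpha (x, y) - 2 * beta (x, y) * pdy beta (x, y)) / (2 * Num.sqrt (Delta alpha beta (x, y))) / 2).
  rewrite /cpdy /pdy /lambda /=; congr Complex.
    exact: (dlin _ (fun t => beta (x, t)) y dby).
  exact: (dsq2 _ (fun t => alpha (x, t)) (fun t => beta (x, t)) y day dby hD).
rewrite cx cy /lambda /i_x /i_y /inv2ib.
move: (Delta alpha beta (x, y)) hD s0 hs => D hD s0 hs.
move: (Num.sqrt D) s0 hs => s s0 hs.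
move: (pdx alpha (x, y)) (pdy alpha (x, y)) (pdx beta (x, y)) (pdy beta (x, y)) (beta (x, y)) => ax ay bx by' b.
set f := real_complex R.
set l := Complex (- b / 2) (s / 2).
set Q := f ax + f bx * l + l * (f ay + f by' * l).
set K := f D^-1 * (f (- b) - f 2 * l).
have -> : (map_poly f (- ((ax%:P + bx%:P * 'X) * (D^-1 *: ((- b)%:P - 2 *: 'X))) +
      'X * - ((ay%:P + by'%:P * 'X) * (D^-1 *: ((- b)%:P - 2 *: 'X))))).[l] = - (Q * K).
  rewrite !(evD, evN, evM, evZ, evC, evX) /Q /K /f; ring.
have Kn : K != 0.
  apply/eqP => /(congr1 (@complex.Im R)) /= h.
  have e : D^-1 * s = - (D^-1 * (0 - (2 * (s / 2) + 0 * (- b / 2))) +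
    0 * (- b - (2 * (- b / 2) - 0 * (s / 2)))) by field; rewrite gt_eqF.
  move: e; rewrite h oppr0 => /eqP; rewrite mulf_eq0 invr_eq0 !gt_eqF //.
have wn : Complex 0 s != 0.
  by apply/eqP => /(congr1 (@complex.Im R)) /= h; move: s0; rewrite h ltxx.
have e2 : ((- bx / 2 +i* ((4 * ax - 2 * b * bx) / (2 * s) / 2)) +
   l * (- by' / 2 +i* ((4 * ay - 2 * b * by') / (2 * s) / 2)))%C * Complex 0 s = - Q.
  rewrite /Q /l /f /=. by congr Complex; field; rewrite gt_eqF.
split.
  move/eqP; rewrite oppr_eq0 mulf_eq0 (negbTE Kn) orbF => /eqP hQ.
  have : ((- bx / 2 +i* ((4 * ax - 2 * b * bx) / (2 * s) / 2)) +
   l * (- by' / 2 +i* ((4 * ay - 2 * b * by') / (2 * s) / 2)))%C * Complex 0 s = 0.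
    by rewrite e2 hQ oppr0.
  by move/eqP; rewrite mulf_eq0 (negbTE wn) orbF => /eqP.
move=> hE.
have : - Q = 0 by rewrite -e2 hE mul0r.
by move/eqP; rewrite oppr_eq0 => /eqP ->; rewrite mul0r oppr0.
Qed.

Theorem proposition3p1 (R : realType) (Omega : set (R * R)) (alpha beta : R * R -> R) :
  open Omega ->
  C1_on Omega alpha -> C1_on Omega beta ->
  (forall z, Omega z -> 0 < Delta alpha beta z) ->
  (rigid Omega alpha beta <->
   (forall z, Omega z ->
      cpdx (lambda alpha beta) z + lambda alpha beta z * cpdy (lambda alpha beta) z = 0)).
Proof.
move=> _ ha hb hD; split.
  by move=> hr [x y] hz; exact: ((pt _ _ _ _ _ _ ha hb hz (hD _ hz)).1 (hr _ hz)).
by move=> hc [x y] hz; exact: ((pt _ _ _ _ _ _ ha hb hz (hD _ hz)).2 (hc _ hz)).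
Qed.
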